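(* Let $C_0$ be an uncountable subset of $\omega_1$ and for each $\alpha\in C_0$ let $\rho_\alpha,\omega_\alpha:[0,\infty)\to[0,\infty)$ be increasing functions with $\rho_\alpha(t)\le\omega_\alpha(t)$ for all $t\ge0$ and $\lim_{t\to\infty}\rho_\alpha(t)=\infty$. Then there exist increasing functions $\rho,\omega:[0,\infty)\to[0,\infty)$ and a decreasing sequence $C_0\supset C_1\supset C_2\supset\cdots$ of uncountable subsets of $\omega_1$ such that (i) $\rho(t)\le\omega(t)$ for all $t\ge0$ and $\lim_{t\to\infty}\rho(t)=\infty$; (ii) for all $k\in\mathbb{N}$, all $\alpha\in C_k$ and all $0\le t\le k$ we have $\rho(t)\le\rho_\alpha(t)$ and $\omega_\alpha(t)\le\omega(t)$. *)

(* Defs.v *)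
From HB Require Import structures.
From mathcomp Require Import all_boot all_order all_algebra.
From mathcomp Require Import all_classical all_reals all_analysis.
Set Implicit Arguments. Unset Strict Implicit. Unset Printing Implicit Defensive.
Import Order.TTheory GRing.Theory Num.Theory.
Local Open Scope classical_set_scope.
Local Open Scope ring_scope.

(* (T, lt) is (order-isomorphic to) the first uncountable ordinal omega_1:
   a strict well-order, all of whose proper initial segments are countable,
   while T itself is uncountable. *)
Definition is_omega1 (T : Type) (lt : T -> T -> Prop) : Prop :=
  [/\ well_founded lt,
      (forall x y z, lt x y -> lt y z -> lt x z),
      (forall x y, lt x y \/ x = y \/ lt y x),
      (forall x, countable [set y | lt y x]) &
      ~ countable [set: T]].

Definition incr_nonneg (R : realType) (f : R -> R) : Prop :=
  (forall t, 0 <= t -> 0 <= f t) /\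
  (forall s t, 0 <= s -> s <= t -> f s <= f t).

(* Main.v *)
Require Import Defs.
From HB Require Import structures.
From mathcomp Require Import all_boot all_order all_algebra.
From mathcomp Require Import all_classical all_reals all_analysis.
Import Order.TTheory GRing.Theory Num.Theory.
Local Open Scope classical_set_scope.
Local Open Scope ring_scope.

Definition gmax (s : nat -> nat) (n : nat) : nat :=
  \max_(j <- iota 0 n.+1 | (s j <= n)%N) j.

Lemma gmax_mono s m n : (m <= n)%N -> (gmax s m <= gmax s n)%N.
Proof.
move=> mn; apply/bigmax_leqP_seq => i; rewrite mem_iota add0n => /andP[_ hi] hs.
apply: leq_bigmax_seq; last exact: leq_trans hs mn.
by rewrite mem_iota add0n (leq_trans hi).
Qed.

Lemma gmax_ge s j : (j <= s j)%N -> (j <= gmax s (s j))%N.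
Proof. by move=> h; apply: leq_bigmax_seq => //; rewrite mem_iota add0n ltnS. Qed.

Lemma gmax_ind s n (P : nat -> Prop) : P 0%N ->
  (forall j, (j <= n)%N -> (s j <= n)%N -> P j) -> P (gmax s n).
Proof.
move=> P0 H; rewrite /gmax big_seq_cond; apply: big_ind => //.
  by move=> x y Px Py; rewrite /maxn; case: ltnP.
by move=> i /andP[]; rewrite mem_iota add0n ltnS; apply: H.
Qed.

Lemma sum_mono (R : realType) (F : nat -> R) m n : (forall i, 0 <= F i) -> (m <= n)%N ->
  \sum_(i < m) F i <= \sum_(i < n) F i.
Proof.
move=> F0 mn; rewrite -!(big_mkord xpredT) (big_cat_nat (leq0n m) mn) /= lerDl.
by apply: sumr_ge0.
Qed.

Lemma sum_term (R : realType) (F : nat -> R) j n : (forall i, 0 <= F i) -> (j < n)%N ->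
  F j <= \sum_(i < n) F i.
Proof.
move=> F0 jn; apply: (le_trans _ (@sum_mono _ F j.+1 n F0 jn)); rewrite big_ord_recr /= lerDr.
by apply: sumr_ge0.
Qed.
Lemma pigeon (T : Type) (A : set T) (P : nat -> set T) :
  ~ countable A -> A `<=` \bigcup_n P n -> exists n, ~ countable (A `&` P n).
Proof.
move=> HA Hcov; apply: contrapT => Hn; apply: HA.
have : countable (\bigcup_(n in [set: nat]) (A `&` P n)).
  apply: bigcup_countable => // n _; apply: contrapT => Hc; apply: Hn; by exists n.
apply: sub_countable; apply: subset_card_le => a Aa.
have [n _ Pn] := Hcov a Aa; by exists n.
Qed.

Lemma near_ex (R : realType) (P : R -> Prop) : (\forall t \near +oo, P t) ->
  exists M : R, forall t, M < t -> P t.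
Proof. case=> M [_ HM]; by exists M. Qed.

Lemma step (R : realType) (T : Type) (C0 : set T) (rhoA omA : T -> R -> R)
  (Hrho : forall a, C0 a -> (forall t, 0 <= t -> 0 <= rhoA a t) /\
                    (forall s t, 0 <= s -> s <= t -> rhoA a s <= rhoA a t))
  (Hom0 : forall a, C0 a -> forall t, 0 <= t -> 0 <= omA a t)
  (Hlim : forall a, C0 a -> rhoA a t @[t --> +oo] --> +oo)
  (A : set T) (k : nat) : ~ countable A -> A `<=` C0 ->
  exists B s N, [/\ B `<=` A, ~ countable B, (k <= s)%N &
     forall a, B a -> k%:R <= rhoA a s%:R /\ omA a k%:R <= N%:R].
Proof.
move=> HA HAC.
have [N HN] := @pigeon _ A (fun n => [set a | omA a k%:R <= n%:R]) HA
  (fun a Aa => ex_intro2 _ _ (Num.truncn (omA a k%:R)).+1 I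
     (ltW (truncnS_gt _))).
have [n Hn] : exists n, ~ countable ((A `&` [set a | omA a k%:R <= N%:R]) `&` [set a | k%:R <= rhoA a (n + k)%:R]).
  apply: pigeon HN _ => a [Aa _].
  have Ca := HAC a Aa.
  have /cvgryPge /(_ k%:R) /near_ex [M HM] := Hlim a Ca.
  exists (Num.truncn `|M|).+1 => //=.
  apply: HM; apply: (le_lt_trans (ler_norm M)).
  apply: (lt_le_trans (truncnS_gt _)); rewrite natrD lerDl; exact: ler0n.
exists ((A `&` [set a | omA a k%:R <= N%:R]) `&` [set a | k%:R <= rhoA a (n + k)%:R]), (n + k)%N, N.
split => //; first by move=> a [[]].
  by rewrite leq_addl.
by move=> a [[_ H1] H2].
Qed.

Theorem lemma4p1 (R : realType) (T : Type) (lt : T -> T -> Prop)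
  (Hw1 : is_omega1 lt) (C0 : set T) (HC0 : ~ countable C0)
  (rhoA omA : T -> R -> R)
  (Hrho : forall a, C0 a -> incr_nonneg (rhoA a))
  (Hom : forall a, C0 a -> incr_nonneg (omA a))
  (Hle : forall a, C0 a -> forall t, 0 <= t -> rhoA a t <= omA a t)
  (Hlim : forall a, C0 a -> rhoA a t @[t --> +oo] --> +oo) :
  exists (rho om : R -> R) (C : nat -> set T),
    [/\ incr_nonneg rho, incr_nonneg om,
        C 0%N = C0,
        (forall k, C k.+1 `<=` C k) &
        (forall k, ~ countable (C k))] /\
    (forall t, 0 <= t -> rho t <= om t) /\
    rho t @[t --> +oo] --> +oo /\
    (forall k : nat, (1 <= k)%N -> forall a, C k a ->
       forall t, 0 <= t -> t <= k%:R -> rho t <= rhoA a t /\ omA a t <= om t).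
Proof.
have Hex : forall x : set T * nat, exists y : set T * nat * nat,
  (~ countable x.1 /\ x.1 `<=` C0) ->
  [/\ y.1.1 `<=` x.1, ~ countable y.1.1, (x.2 <= y.1.2)%N &
     forall a, y.1.1 a -> x.2%:R <= rhoA a y.1.2%:R /\ omA a x.2%:R <= y.2%:R].
  move=> [A k] /=; have [[HA HAC]|Hn] := pselect (~ countable A /\ A `<=` C0).
    have [B [s [N [H1 H2 H3 H4]]]] := @step R T C0 rhoA omA Hrho
       (fun a Ca => (Hom a Ca).1) Hlim A k HA HAC.
    by exists (B, s, N).
  by exists (set0, 0%N, 0%N).
have [f Hf] := choice Hex.
pose C := fix C (k : nat) : set T := if k is k'.+1 then (f (C k', k)).1.1 else C0.
pose s j := (f (C j.-1, j)).1.2.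
pose N j := (f (C j.-1, j)).2.
have HC : forall k, ~ countable (C k) /\ C k `<=` C0.
  elim=> [|k [IH1 IH2]]; first by split.
  have [H1 H2 _ _] := Hf (C k, k.+1) (conj IH1 IH2).
  by split => //; apply: subset_trans H1 IH2.
have HP : forall j, (1 <= j)%N -> [/\ C j `<=` C j.-1, (j <= s j)%N &
     forall a, C j a -> j%:R <= rhoA a (s j)%:R /\ omA a j%:R <= (N j)%:R].
  case=> [//|j] _; have [H1 _ H3 H4] := Hf (C j, j.+1) (HC j); by split.
have Cmono : forall j k, (j <= k)%N -> C k `<=` C j.
  move=> j k; elim: k => [|k IH]; first by rewrite leqn0 => /eqP ->.
  rewrite leq_eqVlt => /orP[/eqP -> //|]; rewrite ltnS => /IH.
  by apply: subset_trans; have [] := HP k.+1 isT.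
pose rho (t : R) : R := (gmax s (Num.truncn t))%:R.
pose om (t : R) : R := rho t + \sum_(j < (Num.truncn t).+2) (N j)%:R.
have N0 : forall j, 0 <= (N j)%:R :> R by move=> j; exact: ler0n.
have rho_inc : incr_nonneg rho.
  split=> [t _|u t _ ut]; first exact: ler0n.
  by rewrite ler_nat; apply: gmax_mono; apply: le_truncn.
have om_inc : incr_nonneg om.
  split=> [t t0|u t u0 ut]; first by apply: addr_ge0; [exact: ler0n|apply: sumr_ge0].
  apply: lerD; first exact: rho_inc.2 u t u0 ut.
  by apply: (@sum_mono _ (fun j => (N j)%:R)) => //; rewrite ltnS ltnS; apply: le_truncn.
exists rho, om, C; split; first split => //.
- by move=> k; have [] := HP k.+1 isT.
- by move=> k; exact: (HC k).1.
split.
  by move=> t t0; rewrite /om lerDl; apply: sumr_ge0.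
split.
  apply/cvgryPge => A.
  pose j := (Num.truncn `|A|).+1.
  have [_ Hj _] := HP j isT.
  near=> t.
  have Ht : (s j)%:R <= t by near: t; apply: nbhs_pinfty_ge; exact: realn.
  have t0 : 0 <= t by apply: le_trans Ht.
  apply: (le_trans (ler_norm A)); apply: (le_trans (ltW (truncnS_gt _))).
  rewrite /rho ler_nat; apply: leq_trans (@gmax_ge s j Hj) _; apply: gmax_mono.
  by rewrite truncn_ge_nat.
  Unshelve. all: end_near.
move=> k k1 a Cka t t0 tk.
have Ca : C0 a := (HC k).2 a Cka.
have trk : (Num.truncn t <= k)%N.
  by rewrite -(ler_nat R); apply: le_trans tk; rewrite truncn_le.
split.
  apply: (@gmax_ind s (Num.truncn t) (fun x => x%:R <= rhoA a t)) => [|j jn sjn]; first exact: (Hrho a Ca).1.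
  case: j jn sjn => [|j] jn sjn; first exact: (Hrho a Ca).1.
  have [_ _ H] := HP j.+1 isT.
  have Caj : C j.+1 a := Cmono _ _ (leq_trans jn trk) a Cka.
  apply: (le_trans (H a Caj).1); apply: (Hrho a Ca).2; first exact: ler0n.
  apply: (@le_trans _ _ (Num.truncn t)%:R); first by rewrite ler_nat.
  by rewrite truncn_le.
have [j [j1 jk tj jlt]] : exists j, [/\ (1 <= j)%N, (j <= k)%N, t <= j%:R &
    (j < (Num.truncn t).+2)%N].
  have [h|h] := leqP (Num.truncn t).+1 k.
    exists (Num.truncn t).+1; split => //; exact: ltW (truncnS_gt _).
  by exists k; split => //; exact: ltnW h.
have [_ _ H] := HP j j1.
have Caj : C j a := Cmono _ _ jk a Cka.
apply: (@le_trans _ _ (N j)%:R).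
  apply: le_trans (H a Caj).2; exact: (Hom a Ca).2 t j%:R t0 tj.
rewrite /om; apply: le_trans (@sum_term _ (fun i => (N i)%:R) j _ N0 jlt) _.
by rewrite lerDr; exact: rho_inc.1.
Qed.
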